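(* Let $X$ be a permutation graph, let $\mathfrak{to}(X)$ and $\mathfrak{to}(\overline X)$ be the sets of transitive orientations of $X$ and of its complement $\overline X$, and let $\mathfrak{to}(X,\overline X)=\mathfrak{to}(X)\times\mathfrak{to}(\overline X)$. The action of ${\rm Aut}(X)$ on $\mathfrak{to}(X,\overline X)$, given by $\pi\cdot(\to,\overline{\to})=(\pi(\to),\pi(\overline{\to}))$, is semiregular (every stabilizer is trivial).
   Context: A permutation graph is a graph $X$ such that both $X$ and $\overline X$ are comparability graphs (equivalently, the intersection graph of segments joining two parallel lines). A transitive orientation of a graph is an orientation of its edges which is a transitive relation. For $\pi\in{\rm Aut}(X)$ and a transitive orientation $\to$, the orientation $\pi(\to)$ is defined by: $x\to y$ implies $\pi(x)\,\pi(\to)\,\pi(y)$; note ${\rm Aut}(X)={\rm Aut}(\overline X)$. *)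

(* Defs.v *)
(* A finite simple graph is a symmetric irreflexive
   relation e : rel T on a finType T. Orientations are relations o : rel T. *)
From mathcomp Require Import all_boot all_fingroup.
Set Implicit Arguments. Unset Strict Implicit. Unset Printing Implicit Defensive.

Section Defs.
Variable T : finType.

Definition simple_graph (e : rel T) : Prop := symmetric e /\ irreflexive e.

Definition compl_graph (e : rel T) : rel T := fun x y => (x != y) && ~~ e x y.

Definition orientation (e o : rel T) : Prop :=
  [/\ forall x y, o x y -> e x y,
      forall x y, e x y -> o x y || o y x
    & forall x y, o x y -> ~~ o y x].

Definition transitive_orientation (e o : rel T) : Prop :=
  orientation e o /\ transitive o.

Definition comparability_graph (e : rel T) : Prop :=
  exists o, transitive_orientation e o.

Definition permutation_graph (e : rel T) : Prop :=
  simple_graph e /\ comparability_graph e /\ comparability_graph (compl_graph e).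

Definition graph_aut (e : rel T) (p : {perm T}) : Prop :=
  forall x y, e (p x) (p y) = e x y.

(* pi(->): x -> y implies pi x pi(->) pi y *)
Definition perm_orient (p : {perm T}) (o : rel T) : rel T :=
  fun x y => o ((p^-1)%g x) ((p^-1)%g y).

End Defs.

(* Main.v *)
Require Import Defs.
From mathcomp Require Import all_boot all_fingroup.
Set Implicit Arguments. Unset Strict Implicit. Unset Printing Implicit Defensive.

Lemma lin_aut_id (T : finType) (L : rel T) (p : {perm T}) :
  irreflexive L -> transitive L ->
  (forall x y, x != y -> L x y || L y x) ->
  (forall x y, L (p x) (p y) = L x y) -> p = 1%g.
Proof.
move=> irr tr tot inv.
pose rk x := #|[set z | L z x]|.
have rkp x : rk (p x) = rk x.
  rewrite /rk -(card_preimset _ (@perm_inj _ p)).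
  by apply: eq_card => z; rewrite !inE inv.
have mono x y : L x y -> rk x < rk y.
  move=> Lxy; apply: proper_card; apply/properP; split.
    by apply/subsetP => z; rewrite !inE => Lzx; apply: tr Lzx Lxy.
  by exists x; rewrite !inE ?Lxy ?irr.
apply/permP => x; rewrite perm1.
apply/eqP; apply/negPn/negP => nx.
have := tot _ _ nx; case/orP => H; have := mono _ _ H; by rewrite rkp ltnn.
Qed.

Theorem mainTheorem5 (T : finType) (e : rel T) :
  permutation_graph e ->
  forall (p : {perm T}), graph_aut e p ->
  forall (o ob : rel T),
    transitive_orientation e o ->
    transitive_orientation (compl_graph e) ob ->
    perm_orient p o =2 o ->
    perm_orient p ob =2 ob ->
    p = 1%g.
Proof.
move=> [[sym _] _] p _ o ob [[oe eo oas] otr] [[obe eob obas] obtr] po pob.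
have inv (r : rel T) : perm_orient p r =2 r -> forall x y, r (p x) (p y) = r x y.
  move=> h x y; rewrite -h /perm_orient !permK //.
have irr (r : rel T) : (forall x y, r x y -> ~~ r y x) -> irreflexive r.
  by move=> h x; apply/negP => rx; move: (h _ _ rx); rewrite rx.
have ce x y : compl_graph e x y -> ~~ e x y by case/andP.
apply: (@lin_aut_id _ (fun x y => o x y || ob x y)).
- by move=> x /=; rewrite (irr _ oas x) (irr _ obas x).
- move=> y x z /= /orP[oxy|obxy] /orP[oyz|obyz].
  + by rewrite (otr _ _ _ oxy oyz).
  + have exy := oe _ _ oxy; have cyz := obe _ _ obyz.
    have nxz : x != z.
      by apply/eqP => exz; subst z; move: (ce _ _ cyz); rewrite sym exy.
    have : e x z || compl_graph e x z by rewrite /compl_graph nxz; case: (e x z).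
    case/orP => [/eo /orP[->//|ozx] | /eob /orP[->|obzx]]; rewrite ?orbT //.
    * by move: (ce _ _ cyz); rewrite sym (oe _ _ (otr _ _ _ ozx oxy)).
    * by move: (ce _ _ (obe _ _ (obtr _ _ _ obyz obzx))); rewrite sym exy.
  + have cxy := obe _ _ obxy; have eyz := oe _ _ oyz.
    have nxz : x != z.
      by apply/eqP => exz; subst z; move: (ce _ _ cxy); rewrite sym eyz.
    have : e x z || compl_graph e x z by rewrite /compl_graph nxz; case: (e x z).
    case/orP => [/eo /orP[->//|ozx] | /eob /orP[->|obzx]]; rewrite ?orbT //.
    * by move: (ce _ _ cxy); rewrite sym (oe _ _ (otr _ _ _ oyz ozx)).
    * by move: (ce _ _ (obe _ _ (obtr _ _ _ obzx obxy))); rewrite sym eyz.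
  + by rewrite (obtr _ _ _ obxy obyz) orbT.
- move=> x y nxy.
  have : e x y || compl_graph e x y by rewrite /compl_graph nxy; case: (e x y).
  case/orP => [/eo /orP[->|->] | /eob /orP[->|->]]; rewrite ?orbT //.
- by move=> x y /=; rewrite (inv _ po) (inv _ pob).
Qed.
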